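(* Let $n\ge1$. Let $M'_n$ be the $2^{n-1}\times2^{n-1}$ matrix with rows and columns indexed by subsets of $\{1,\dots,n-1\}$ and $(M'_n)_{I,J}=a_{n,I,J}$, the number of simple $n$-braids $x$ with $D_L(x)=I$ and $D_R(x)\supseteq J$. Let $M_n$ be the $n!\times n!$ matrix with rows and columns indexed by the simple $n$-braids (same order for rows and columns) with $(M_n)_{x,y}=1$ if $(x,y)$ is normal and $0$ otherwise. Then the characteristic polynomials of $M'_n$ and $M_n$ coincide up to a factor that is a power of the variable, and for every simple $n$-braid $y$ with $D_L(y)=J$ and every $d\ge1$, $$b_{n,d}(y)=\big((1,1,\dots,1)\,M_n'^{\,d-1}\big)_J.$$
   Context: $B_n^+$ is the positive braid monoid with generators $\sigma_1,\dots,\sigma_{n-1}$ and relations $\sigma_i\sigma_j=\sigma_j\sigma_i$ ($|i-j|\ge2$), $\sigma_i\sigma_j\sigma_i=\sigma_j\sigma_i\sigma_j$ ($|i-j|=1$). $\Delta_1=1$, $\Delta_n=\sigma_1\cdots\sigma_{n-1}\Delta_{n-1}$. Simple $n$-braids are the left (equivalently right) divisors of $\Delta_n$ in $B_n^+$. For simple $x$, $D_L(x)$ (resp. $D_R(x)$) is the set of $i\in\{1,\dots,n-1\}$ with $\sigma_i$ a left (resp. right) divisor of $x$. A sequence $(x_1,\dots,x_d)$ of simple $n$-braids is normal if $x_k=\gcd(\Delta_n,x_k\cdots x_d)$ (greatest common left divisor) for each $k$; equivalently $D_R(x_k)\supseteq D_L(x_{k+1})$ for all $k<d$. For a simple $n$-braid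 $y$, $b_{n,d}(y)$ is the number of normal sequences $(x_1,\dots,x_{d-1},y)$. *)

(* Defs.v *)
(* Positive braid monoid B_n^+ presented by words over the
   generators sigma_1..sigma_{n-1} (letter i : nat stands for sigma_i),
   modulo the congruence generated by the braid relations. *)
From HB Require Import structures.
From mathcomp Require Import all_boot all_order all_algebra.
From mathcomp Require Export boolp.
Unset Printing Implicit Defensive.

Definition valid (n : nat) (w : seq nat) : bool := all (fun i => 0 < i < n) w.

Definition far (i j : nat) : bool := (i.+1 < j) || (j.+1 < i).
Definition adj (i j : nat) : bool := (i.+1 == j) || (j.+1 == i).

Inductive braid_step : seq nat -> seq nat -> Prop :=
| bs_comm i j : far i j -> braid_step [:: i; j] [:: j; i]
| bs_braid i j : adj i j -> braid_step [:: i; j; i] [:: j; i; j].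

Inductive braid_eq : seq nat -> seq nat -> Prop :=
| be_refl w : braid_eq w w
| be_sym w v : braid_eq w v -> braid_eq v w
| be_trans u v w : braid_eq u v -> braid_eq v w -> braid_eq u w
| be_ctx u v l r : braid_step l r -> braid_eq (u ++ l ++ v) (u ++ r ++ v).

Fixpoint delta (m : nat) : seq nat :=
  if m is m'.+1 then iota 1 m' ++ delta m' else [::].

Definition left_div (n : nat) (x y : seq nat) : Prop :=
  exists z, valid n z /\ braid_eq (x ++ z) y.
Definition right_div (n : nat) (x y : seq nat) : Prop :=
  exists z, valid n z /\ braid_eq (z ++ x) y.

Definition simple (n : nat) (x : seq nat) : Prop :=
  valid n x /\ left_div n x (delta n).

(* Subsets of {1,...,n-1} are encoded as I : {set 'I_n.-1}, k \in I <-> k+1 in the subset *)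
Definition DL_is (n : nat) (x : seq nat) (I : {set 'I_n.-1}) : Prop :=
  forall k : 'I_n.-1, k \in I <-> left_div n [:: k.+1] x.
Definition DR_supset (n : nat) (x : seq nat) (J : {set 'I_n.-1}) : Prop :=
  forall k : 'I_n.-1, k \in J -> right_div n [:: k.+1] x.

Definition is_lgcd (n : nat) (a b g : seq nat) : Prop :=
  left_div n g a /\ left_div n g b /\
  forall z, valid n z -> left_div n z a -> left_div n z b -> left_div n z g.

Definition normal (n : nat) (xs : seq (seq nat)) : Prop :=
  (forall x, x \in xs -> simple n x) /\
  forall k, k < size xs -> is_lgcd n (delta n) (flatten (drop k xs)) (nth [::] xs k).

Definition simple_reps (n : nat) (s : seq (seq nat)) : Prop :=
  (forall x, x \in s -> simple n x) /\
  (forall x, simple n x -> exists i : 'I_(size s), braid_eq x (nth [::] s i)) /\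
  (forall i j : 'I_(size s), braid_eq (nth [::] s i) (nth [::] s j) -> i = j).

Definition a_count (n : nat) (s : seq (seq nat)) (I J : {set 'I_n.-1}) : nat :=
  #|[set i : 'I_(size s) | `[< DL_is n (nth [::] s i) I /\ DR_supset n (nth [::] s i) J >]]|.

Local Open Scope ring_scope.

Definition Mprime (n : nat) (s : seq (seq nat)) : 'M[int]_(#|{set 'I_n.-1}|) :=
  \matrix_(i, j) (a_count n s (enum_val i) (enum_val j))%:Z.

Definition Mn (n : nat) (s : seq (seq nat)) : 'M[int]_(size s) :=
  \matrix_(i, j) (if `[< normal n [:: nth [::] s i; nth [::] s j] >] then 1 else 0).

Local Close Scope ring_scope.

Definition b_count (n d : nat) (s : seq (seq nat)) (y : seq nat) : nat :=
  #|[set f : {ffun 'I_(d.-1) -> 'I_(size s)} |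
     `[< normal n ([seq nth [::] s (f k) | k <- enum 'I_(d.-1)] ++ [:: y]) >]]|.

(* Main.v *)
From Stdlib Require Import Setoid Morphisms.
Require Import Defs.
From HB Require Import structures.
From mathcomp Require Import all_boot all_order all_algebra zify.
Set Implicit Arguments. Unset Strict Implicit.
Import GRing.Theory.

Notation "u ≡ v" := (braid_eq u v) (at level 70).

Lemma beT u v w : u ≡ v -> v ≡ w -> u ≡ w. Proof. exact: be_trans. Qed.
Lemma beS u v : u ≡ v -> v ≡ u. Proof. exact: be_sym. Qed.
Lemma beR u : u ≡ u. Proof. exact: be_refl. Qed.
Arguments beT {u} v {w}.

Lemma be_cat u u' v v' : u ≡ u' -> v ≡ v' -> u ++ v ≡ u' ++ v'.
Proof.
have H1 : forall a b x y, x ≡ y -> a ++ x ++ b ≡ a ++ y ++ b.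
  move=> a b x y; elim=> {x y} [x|x y _ IH|x y z _ IH1 _ IH2|u0 v0 l r st].
  - exact: beR.
  - exact: beS.
  - exact: beT IH2.
  - have -> : a ++ (u0 ++ l ++ v0) ++ b = (a ++ u0) ++ l ++ (v0 ++ b) by rewrite !catA.
    have -> : a ++ (u0 ++ r ++ v0) ++ b = (a ++ u0) ++ r ++ (v0 ++ b) by rewrite !catA.
    exact: be_ctx.
move=> Hu Hv; apply: (beT (u' ++ v)).
  by have := H1 [::] v _ _ Hu.
by have := H1 u' [::] _ _ Hv; rewrite !cats0.
Qed.

Lemma be_consl a v v' : v ≡ v' -> a :: v ≡ a :: v'.
Proof. by move=> H; apply: (@be_cat [:: a] [:: a]) => //; apply: beR. Qed.

Lemma step_all (P : pred nat) l r : braid_step l r -> all P l = all P r /\ size l = size r.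
Proof. by case=> i j _ /=; rewrite ?andbT; split=> //; case: (P i); case: (P j). Qed.

Lemma be_all (P : pred nat) u v : u ≡ v -> all P u = all P v /\ size u = size v.
Proof.
elim=> {u v} [u|u v _ [IH1 IH2]|u v w _ [IH1 IH2] _ [IH3 IH4]|u v l r st].
- by [].
- by [].
- by rewrite IH1 IH3 IH2 IH4.
- by case: (step_all P st) => H1 H2; rewrite !all_cat !size_cat H1 H2.
Qed.

Lemma be_size u v : u ≡ v -> size u = size v.
Proof. by case/(be_all predT). Qed.

Lemma be_valid n u v : u ≡ v -> valid n u -> valid n v.
Proof. by rewrite /valid; case/(be_all (fun i => 0 < i < n))=> ->. Qed.

Lemma be_rev u v : u ≡ v -> rev u ≡ rev v.
Proof.
elim=> {u v} [u|u v _ IH|u v w _ IH1 _ IH2|u v l r st].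
- exact: beR.
- exact: beS.
- exact: beT IH2.
- rewrite !rev_cat -!catA; apply: be_ctx; case: st => i j H.
  + by rewrite /= ; apply: bs_comm; move: H; rewrite /far orbC.
  + by rewrite /=; apply: bs_braid; move: H; rewrite /adj orbC.
Qed.

Add Parametric Relation : (seq nat) braid_eq
  reflexivity proved by beR symmetry proved by beS transitivity proved by @be_trans as braid_rel.
Add Parametric Morphism : (@cons nat) with signature eq ==> braid_eq ==> braid_eq as cons_mor.
Proof. by move=> a x y; apply: be_consl. Qed.
Add Parametric Morphism : (@cat nat) with signature braid_eq ==> braid_eq ==> braid_eq as cat_mor.
Proof. by move=> x y H u v K; apply: be_cat. Qed.


Definition C a b X Y : Prop :=
  (a = b /\ X ≡ Y) \/ (adj a b /\ exists Z, X ≡ b::a::Z /\ Y ≡ a::b::Z) \/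
  (far a b /\ exists Z, X ≡ b::Z /\ Y ≡ a::Z).

#[local] Hint Resolve beR : core.
Ltac rl := unfold far, adj in *; lia.

Lemma sw u a b w : far a b -> u ++ [:: a, b & w] ≡ u ++ [:: b, a & w].
Proof. move=> H; have := be_ctx u w _ _ (bs_comm _ _ H); by []. Qed.
Lemma br u a b w : adj a b -> u ++ [:: a, b, a & w] ≡ u ++ [:: b, a, b & w].
Proof. move=> H; have := be_ctx u w _ _ (bs_braid _ _ H); by []. Qed.

Lemma C_eq a X Y : C a a X Y -> X ≡ Y.
Proof. case=> [[_ H]|[[H1 H2]|[H1 H2]]]; first by []; rl. Qed.
Lemma C_adj a b X Y : adj a b -> C a b X Y -> exists Z, X ≡ b::a::Z /\ Y ≡ a::b::Z.
Proof. by move=> Hab; case=> [[E _]|[[H K]|[H _]]] //; rl. Qed.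
Lemma C_far a b X Y : far a b -> C a b X Y -> exists Z, X ≡ b::Z /\ Y ≡ a::Z.
Proof. by move=> Hab; case=> [[E _]|[[H _]|[H K]]] //; rl. Qed.

Lemma C_sym a b X Y : C a b X Y -> C b a Y X.
Proof.
case=> [[-> H]|[[H [Z [H1 H2]]]|[H [Z [H1 H2]]]]].
- by left; split=> //; apply: beS.
- by right; left; split; [rl | exists Z].
- by right; right; split; [rl | exists Z].
Qed.

Lemma C_compat a b X Y X' Y' : X ≡ X' -> Y ≡ Y' -> C a b X Y -> C a b X' Y'.
Proof.
move=> HX HY; case=> [[-> H]|[[H [Z [H1 H2]]]|[H [Z [H1 H2]]]]].
- by left; split=> //; apply: (beT X); [apply: beS| apply: (beT Y)].
- by right; left; split=> //; exists Z; split; [apply: (beT X) => //; apply: beS | apply: (beT Y) => //; apply: beS].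
- by right; right; split=> //; exists Z; split; [apply: (beT X) => //; apply: beS | apply: (beT Y) => //; apply: beS].
Qed.

Ltac szs := repeat match goal with H : ?x ≡ ?y |- _ => let e := fresh in have e := be_size H; clear H end;
  simpl in *; lia.


Lemma swr {a b} w : far a b -> a :: b :: w ≡ b :: a :: w.
Proof. by move=> H; apply: (sw [::] w H). Qed.
Lemma brr {a b} w : adj a b -> [:: a, b, a & w] ≡ [:: b, a, b & w].
Proof. by move=> H; apply: (br [::] w H). Qed.
Lemma farS a b : far a b -> far b a. Proof. rl. Qed.
Lemma adjS a b : adj a b -> adj b a. Proof. rl. Qed.


Lemma Gc m (G : forall (a b : nat) (U V : seq nat), size U < m -> a::U ≡ b::V -> C a b U V) a U V : size U < m -> a :: U ≡ a :: V -> U ≡ V.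
Proof. by move=> H1 H2; apply: C_eq (G _ _ _ _ H1 H2). Qed.

Lemma TFA m (G : forall (a b : nat) (U V : seq nat), size U < m -> a::U ≡ b::V -> C a b U V) a b c X Y Z : size X = m -> far a c -> adj c b ->
  (exists U, X ≡ c::U /\ Z ≡ a::U) -> (exists V, Z ≡ b::c::V /\ Y ≡ c::b::V) -> C a b X Y.
Proof.
move=> sX Hac Hcb [U [XU ZU]] [V [ZV YV]].
have Hca := farS Hac; have Hbc := adjS Hcb.
have H1 : a :: U ≡ b :: c :: V by rewrite -ZU.
have sU : size U < m by szs.
have [Hab|[Hab|Hab]] : a = b \/ adj a b \/ far a b by rl.
- by subst b; rl.
- have Hba := adjS Hab.
  have [T [UT VT]] := C_adj Hab (G _ _ _ _ sU H1).
  have sV : size V < m by szs.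
  have [S [VS TS]] := C_far Hca (G _ _ _ _ sV VT).
  have sT : size T < m by szs.
  have [R [TR SR]] := C_adj Hbc (G _ _ _ _ sT TS).
  right; left; split=> //; exists [:: c, b, a & R]; split.
  + rewrite XU UT TR (swr [:: b & R] Hac) (brr [:: a, b & R] Hcb) (brr R Hba).
    rewrite (swr [:: b, a & R] Hca). reflexivity.
  + rewrite YV VS SR (brr [:: c & R] Hba) (swr [:: b, a, c & R] Hca) (swr R Hac).
    by rewrite (brr [:: a & R] Hcb).
- have Hba := farS Hab.
  have [T [UT VT]] := C_far Hab (G _ _ _ _ sU H1).
  have sV : size V < m by szs.
  have [S [VS TS]] := C_far Hca (G _ _ _ _ sV VT).
  right; right; split=> //; exists [:: c, b & S]; split.
  + by rewrite XU UT TS (brr S Hcb).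
  + by rewrite YV VS (swr S Hba) (swr [:: b & S] Hca).
Qed.

Lemma TFF m (G : forall (a b : nat) (U V : seq nat), size U < m -> a::U ≡ b::V -> C a b U V) a b c X Y Z : size X = m -> far a c -> far c b ->
  (exists U, X ≡ c::U /\ Z ≡ a::U) -> (exists V, Z ≡ b::V /\ Y ≡ c::V) -> C a b X Y.
Proof.
move=> sX Hac Hcb [U [XU ZU]] [V [ZV YV]].
have Hca := farS Hac; have Hbc := farS Hcb.
have H1 : a :: U ≡ b :: V by rewrite -ZU.
have sU : size U < m by szs.
have [Hab|[Hab|Hab]] : a = b \/ adj a b \/ far a b by rl.
- subst b; left; split=> //; by rewrite XU YV (Gc G sU H1).
- have [T [UT VT]] := C_adj Hab (G _ _ _ _ sU H1).
  right; left; split=> //; exists [:: c & T]; split.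
  + by rewrite XU UT (swr [:: a & T] Hcb) (swr T Hca).
  + by rewrite YV VT (swr [:: b & T] Hca) (swr T Hcb).
- have [T [UT VT]] := C_far Hab (G _ _ _ _ sU H1).
  right; right; split=> //; exists [:: c & T]; split.
  + by rewrite XU UT (swr T Hcb).
  + by rewrite YV VT (swr T Hca).
Qed.

Lemma TAA m (G : forall (a b : nat) (U V : seq nat), size U < m -> a::U ≡ b::V -> C a b U V) a b c X Y Z : size X = m -> adj a c -> adj c b ->
  (exists U, X ≡ c::a::U /\ Z ≡ a::c::U) -> (exists V, Z ≡ b::c::V /\ Y ≡ c::b::V) -> C a b X Y.
Proof.
move=> sX Hac Hcb [U [XU ZU]] [V [ZV YV]].
have Hca := adjS Hac; have Hbc := adjS Hcb.
have H1 : a :: c :: U ≡ b :: c :: V by rewrite -ZU.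
have sU1 : size (c :: U) < m by szs.
have [Hab|Hab] : a = b \/ far a b by rl.
- subst b; left; split=> //.
  have H2 := Gc G sU1 H1.
  have sU0 : size U < m by szs.
  by rewrite XU YV (Gc G sU0 H2).
- have Hba := farS Hab.
  have [T [UT VT]] := C_far Hab (G _ _ _ _ sU1 H1).
  have sU : size U < m by szs.
  have [P [UP TP]] := C_adj Hcb (G _ _ _ _ sU UT).
  rewrite TP in VT.
  have sV : size V < m by szs.
  have [Q [VQ PQ]] := C_adj Hca (G _ _ _ _ sV VT).
  have sbP : size (b :: P) < m by szs.
  have PQ' := Gc G sbP PQ.
  have sP : size P < m by szs.
  have [S [PS QS]] := C_far Hba (G _ _ _ _ sP PQ').
  right; right; split=> //; exists [:: c, a, b, c & S]; split.
  + rewrite XU UP PS (swr [:: c, a & S] Hab) (brr S Hac) (brr [:: a, c & S] Hcb).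
    by rewrite (swr [:: c & S] Hba).
  + rewrite YV VQ QS (swr [:: c, b & S] Hba) (brr S Hbc).
    by rewrite (brr [:: b, c & S] Hca).
Qed.

Lemma Ctrans m (G : forall (a b : nat) (U V : seq nat), size U < m -> a::U ≡ b::V -> C a b U V) a b c X Y Z : size X = m -> C a c X Z -> C c b Z Y -> C a b X Y.
Proof.
move=> sX H1 H2.
case: H1 => [[Eac XZ]|H1']; first by subst c; exact: C_compat (beS XZ) (beR Y) H2.
case: H2 => [[Ecb ZY]|H2']; first by subst c; exact: C_compat (beR X) ZY (or_intror H1').
case: H1' => [[Hac [U [XU ZU]]]|[Hac [U [XU ZU]]]]; case: H2' => [[Hcb HV]|[Hcb HV]].
- by apply: (TAA G sX Hac Hcb _ HV); exists U; split.
- case: HV => V [ZV YV].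
  have sY : size Y = m by szs.
  apply: C_sym; apply: (TFA G (Z:=Z) sY (farS Hcb) (adjS Hac)); first by exists V; split.
  by exists U; split.
- by apply: (TFA G sX Hac Hcb _ HV); exists U; split.
- by apply: (TFF G sX Hac Hcb _ HV); exists U; split.
Qed.

Lemma GL m : forall a b X Y, size X = m -> a::X ≡ b::Y -> C a b X Y.
Proof.
elim/ltn_ind: m => m IH.
have G : forall a b U V, size U < m -> a::U ≡ b::V -> C a b U V.
  by move=> a b U V sU; apply: IH sU _ _ _ _ erefl.
suff K : forall w v, w ≡ v -> forall a b X Y, w = a::X -> v = b::Y -> size X = m -> C a b X Y.
  by move=> a b X Y sX H; exact: K _ _ H _ _ _ _ erefl erefl sX.
move=> w v; elim => {w v} [w|w v H IH1|u v w H1 IH1 H2 IH2|u v l r st] a b X Y Ew Ev sX.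
- by subst; case: Ev => -> ->; left.
- apply: C_sym; apply: IH1 => //; subst; have := be_size H; rewrite /= => -[]; lia.
- case: v H1 H2 IH1 IH2 => [|c Z] H1 H2 IH1 IH2; first by have := be_size H1; subst.
  have sZ : size Z = m by have := be_size H1; subst => /= -[].
  have K1 := IH1 _ _ _ _ Ew erefl sX. have K2 := IH2 _ _ _ _ erefl Ev sZ. apply: (Ctrans G sX K1 K2).
- case: u Ew Ev => [|c u] /= Ew Ev.
  + case: st Ew Ev => i j Hij /= [<- <-] [<- <-].
    * by right; right; split=> //; exists v.
    * by right; left; split=> //; exists v.
  + case: Ew Ev => <- <- [-> <-]; left; split=> //.
    exact: be_ctx.
Qed.

Lemma cancel1 a X Y : a :: X ≡ a :: Y -> X ≡ Y.
Proof. by move=> H; apply: C_eq (GL erefl H). Qed.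

Lemma cancelL u X Y : u ++ X ≡ u ++ Y -> X ≡ Y.
Proof. by elim: u => [|a u IH] //= H; apply: IH; apply: cancel1 H. Qed.

Lemma GLadj a b X Y : adj a b -> a :: X ≡ b :: Y -> exists Z, X ≡ b::a::Z /\ Y ≡ a::b::Z.
Proof. by move=> H K; apply: C_adj H (GL erefl K). Qed.
Lemma GLfar a b X Y : far a b -> a :: X ≡ b :: Y -> exists Z, X ≡ b::Z /\ Y ≡ a::Z.
Proof. by move=> H K; apply: C_far H (GL erefl K). Qed.


#[local] Hint Resolve beR : core.

(* crossing invariant *)
Definition swp (g : nat -> nat) i := fun p => if p == i then g i.+1 else if p == i.+1 then g i else g p.
Definition spair (x y : nat) := (minn x y, maxn x y).
Fixpoint cr g w := if w is i :: w' then spair (g i) (g i.+1) :: cr (swp g i) w' else [::].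
Fixpoint fin g w := if w is i :: w' then fin (swp g i) w' else g.

Lemma cr_cat g u v : cr g (u ++ v) = cr g u ++ cr (fin g u) v.
Proof. by elim: u g => [|i u IH] g //=; rewrite IH. Qed.
Lemma fin_cat g u v : fin g (u ++ v) = fin (fin g u) v.
Proof. by elim: u g => [|i u IH] g //=. Qed.

Lemma spairC x y : spair x y = spair y x.
Proof. by rewrite /spair minnC maxnC. Qed.

Ltac swpdec := rewrite /swp; repeat match goal with |- context [if ?a == ?b then _ else _] => case: (a =P b) => ? end;
  try congruence; try (unfold far, adj in *; lia).

Lemma step_cr l r g : braid_step l r -> perm_eq (cr g l) (cr g r) /\ fin g l = fin g r.
Proof.
case=> i j H /=.
- split.
  + have -> : swp g i j = g j by swpdec.
    have -> : swp g i j.+1 = g j.+1 by swpdec.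
    have -> : swp g j i = g i by swpdec.
    have -> : swp g j i.+1 = g i.+1 by swpdec.
    by rewrite (perm_catCA [:: _] [:: _] [::]).
  + by apply: funext => p; swpdec.
- wlog: i j H / j = i.+1.
    move=> W; case/orP: (H) => /eqP E; first exact: W.
    have [H1 H2] := W j i (adjS H) (esym E).
    by split; [rewrite perm_sym | rewrite H2].
  move=> -> {j H}.
  split.
  + have -> : swp g i i.+1 = g i by swpdec.
    have -> : swp g i i.+2 = g i.+2 by swpdec.
    have -> : swp (swp g i) i.+1 i = g i.+1 by swpdec.
    have -> : swp (swp g i) i.+1 i.+1 = g i.+2 by swpdec.
    have -> : swp g i.+1 i = g i by swpdec.
    have -> : swp g i.+1 i.+1 = g i.+2 by swpdec.
    have -> : swp (swp g i.+1) i i.+1 = g i by swpdec.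
    have -> : swp (swp g i.+1) i i.+2 = g i.+1 by swpdec.
    rewrite (spairC (g i.+1) (g i.+2)) (spairC (g i) (g i.+1)) (spairC (g i) (g i.+2)).
    by rewrite perm_sym -{1}[[:: _; _; _]]revK perm_rev.
  + by apply: funext => p; swpdec.
Qed.

Lemma be_cr u v g : u ≡ v -> perm_eq (cr g u) (cr g v) /\ fin g u = fin g v.
Proof.
move=> H; elim: H g => {u v} [u|u v _ IH|u v w _ IH1 _ IH2|u v l r st] g.
- by [].
- by have [H1 H2] := IH g; rewrite perm_sym H1 H2.
- have [H1 H2] := IH1 g; have [H3 H4] := IH2 g.
  by split; [apply: perm_trans H3 | rewrite H2].
- have [H1 H2] := step_cr (fin g u) st.
  rewrite !cr_cat !fin_cat ?cr_cat ?fin_cat H2 perm_cat2l; split=> //.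
  by rewrite perm_cat2r.
Qed.

Ltac crunch := rewrite /swp; repeat match goal with |- context [if ?b then _ else _] => case: (boolP b) => ? end;
  try (by exfalso; lia); try (by congr (_ _); lia).

Lemma fin_iota p q g x : fin g (iota p q) x =
  if (p <= x < p + q) then g x.+1 else if x == p + q then g p else g x.
Proof.
elim: q p g => [|q IH] p g /=; first by crunch.
rewrite IH addSnnS; crunch.
Qed.

Lemma cr_iota p q g : cr g (iota p q) = [seq spair (g p) (g (p + k.+1)) | k <- iota 0 q].
Proof.
elim: q p g => [|q IH] p g //=.
rewrite IH -(addn0 1) iotaDl -map_comp; congr (_ :: _); first by rewrite addn1.
apply: eq_map => k /=; congr spair; crunch.
Qed.

Lemma spair_inv x y u v : spair x y = spair u v -> (x = u /\ y = v) \/ (x = v /\ y = u).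
Proof. rewrite /spair => -[]; lia. Qed.

Lemma delta_uniq k : forall g, (forall x y, 0 < x <= k -> 0 < y <= k -> g x = g y -> x = y) ->
  uniq (cr g (delta k)) /\
  forall pr, pr \in cr g (delta k) -> exists x y, [/\ 0 < x <= k, 0 < y <= k & pr = spair (g x) (g y)].
Proof.
elim: k => [|k IH] g Hg; first by [].
rewrite /= cr_cat cr_iota.
set h := fin g (iota 1 k).
have hx : forall x, 0 < x <= k -> h x = g x.+1.
  by move=> x Hx; rewrite /h fin_iota; case: ifP => //; lia.
have [U M] : uniq (cr h (delta k)) /\
  forall pr, pr \in cr h (delta k) -> exists x y, [/\ 0 < x <= k, 0 < y <= k & pr = spair (h x) (h y)].
  apply: IH => x y Hx Hy; rewrite !hx // => E.
  by have := Hg x.+1 y.+1 ltac:(lia) ltac:(lia) E => -[].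
split.
- rewrite cat_uniq U andbT; apply/andP; split.
  + rewrite map_inj_in_uniq ?iota_uniq // => a b; rewrite !mem_iota => Ha Hb /spair_inv.
    case=> [[_ E]|[E _]].
    * have : 1 + a.+1 = 1 + b.+1 by apply: (Hg _ _ _ _ E); lia.
      lia.
    * have : 1 = 1 + b.+1 by apply: (Hg _ _ _ _ E); lia.
      lia.
  + apply/hasPn => pr /M [x [y [Hx Hy ->]]].
    apply/negP => /mapP [j]; rewrite mem_iota => Hj.
    rewrite !hx //; case/spair_inv => [[E _]|[_ E]].
    * have : x.+1 = 1 by apply: (Hg _ _ _ _ E); lia.
      lia.
    * have : y.+1 = 1 by apply: (Hg _ _ _ _ E); lia.
      lia.
- move=> pr; rewrite mem_cat => /orP [/mapP [j]|/M [x [y [Hx Hy ->]]]].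
  + rewrite mem_iota => Hj ->; exists 1, (1 + j.+1); split=> //; lia.
  + by exists x.+1, y.+1; rewrite -!hx //; split=> //; lia.
Qed.

Lemma delta_sqfree n u j v : ~ (u ++ [:: j; j] ++ v ≡ delta n).
Proof.
move=> H; have [P _] := be_cr id H.
have [U _] := delta_uniq (g := id) (k := n) (fun x y _ _ E => E).
move: U; rewrite -(perm_uniq P) cr_cat cat_uniq /= => /and3P [_ _] /andP [].
rewrite inE; set h := fin id u.
have -> : swp h j j = h j.+1 by crunch.
have -> : swp h j j.+1 = h j by crunch.
by rewrite spairC eqxx.
Qed.

Lemma valid_mono m n w : m <= n -> valid m w -> valid n w.
Proof. move=> H; apply: sub_all => i /andP [H1 H2]; apply/andP; split=> //; lia. Qed.

Lemma valid_cat n u v : valid n (u ++ v) = valid n u && valid n v.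
Proof. exact: all_cat. Qed.

Lemma valid_iota n p q : 0 < p -> p + q <= n -> valid n (iota p q).
Proof. by move=> H1 H2; apply/allP => i; rewrite mem_iota => /andP [H3 H4]; apply/andP; split; lia. Qed.

Lemma valid_delta n : valid n (delta n).
Proof.
elim: n => [|n IH] //=; rewrite valid_cat valid_iota //.
exact: valid_mono IH.
Qed.

Lemma comm_far a w : all (far a) w -> w ++ [:: a] ≡ a :: w.
Proof.
elim: w => [|b w IH] //= /andP [H1 H2].
by rewrite (IH H2) (swr w (farS H1)).
Qed.

Lemma iota_shift q p j : p <= j -> j.+2 <= p + q -> iota p q ++ [:: j] ≡ j.+1 :: iota p q.
Proof.
elim: q p => [|q IH] p H1 H2; first by lia.
case: (ltngtP p j) => Hpj; last first.
- subst j; case: q IH H2 => [|q] IH H2; first by lia.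
  rewrite /= comm_far; last by apply/allP => x; rewrite mem_iota; rewrite /far; lia.
  by rewrite (brr _ (_ : adj p p.+1)) //; rewrite /adj eqxx.
- by lia.
- rewrite /= IH; try lia.
  by rewrite (swr _ (_ : far p j.+1)) //; rewrite /far; lia.
Qed.

Lemma delta_div n i : 0 < i < n -> exists z, valid n z /\ i :: z ≡ delta n.
Proof.
elim: n i => [|k IH] i Hi; first by lia.
case: (ltngtP i 1) => H1; first by lia.
- have [z [Vz Ez]] := IH i.-1 ltac:(lia).
  exists (iota 1 k ++ z); split.
    by rewrite valid_cat valid_iota //; exact: valid_mono Vz.
  rewrite /= -Ez -cat_rcons -cats1 iota_shift; try lia.
  by rewrite prednK //; lia.
- subst i; case: k IH Hi => [|k] IH Hi; first by lia.
  exists (iota 2 k ++ delta k.+1); split.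
    by rewrite valid_cat valid_iota //; exact: valid_mono (valid_delta _).
  by [].
Qed.

#[local] Hint Resolve beR : core.

Definition rdiv1 i x := exists z, z ++ [:: i] ≡ x.
Definition ldiv1 i y := exists u, i :: u ≡ y.

Lemma rel3 a b : a = b \/ adj a b \/ far a b.
Proof. rl. Qed.

Lemma Qlem n k : forall x, size x = k -> forall y i, x ++ y ≡ delta n -> 0 < i < n ->
  rdiv1 i x \/ ldiv1 i y.
Proof.
elim/ltn_ind: k => k IH x sx y i H Hi; case/lastP: x sx H => [|x b] sx H.
  by have [z [_ E]] := delta_div Hi; right; exists z; rewrite E -H.
have H' : x ++ b :: y ≡ delta n by rewrite -H cat_rcons.
have sx' : size x < k by rewrite -sx size_rcons.
case: (IH _ sx' x erefl _ _ H' Hi) => [[v Ev]|[u Eu]].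
- have [E|[E|E]] := rel3 i b.
  + by subst b; left; exists x; rewrite cats1.
  + have sv : size v < k by have := be_size Ev; rewrite size_cat /=; lia.
    have Hb : 0 < b < n.
      have := be_valid (beS H) (valid_delta n); rewrite /valid all_cat => /andP [/allP V _].
      by apply: V; rewrite mem_rcons inE eqxx.
    have H2 : v ++ [:: i, b & y] ≡ delta n by rewrite -H' -Ev -catA.
    case: (IH _ sv v erefl _ _ H2 Hb) => [[w Ew]|[u Eu]].
    * left; exists (w ++ [:: i; b]); rewrite -cats1 -Ev -Ew -!catA /=.
      by rewrite (brr [::] (adjS E)).
    * have [Z [_ EZ]] := GLadj (adjS E) Eu.
      by right; exists Z; rewrite (cancel1 EZ).
  + by left; exists (v ++ [:: b]); rewrite -cats1 -Ev -!catA /= (swr [::] (farS E)).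
- have [E|[E|E]] := rel3 i b.
  + by subst b; left; exists x; rewrite cats1.
  + by have [Z [_ EZ]] := GLadj E Eu; right; exists (b :: Z); rewrite EZ.
  + by have [Z [_ EZ]] := GLfar E Eu; right; exists Z; rewrite EZ.
Qed.

Lemma Gbase k : forall x, size x = k -> forall A B c,
  (forall j, ldiv1 j A -> ldiv1 j B -> False) ->
  ldiv1 c (x ++ A) -> ldiv1 c (x ++ B) -> ldiv1 c x.
Proof.
elim/ltn_ind: k => k IH [|a x] sx A B c D [U EU] [V EV].
  by case: (D c); [exists U | exists V].
have sx' : size x < k by rewrite -sx.
have [E|[E|E]] := rel3 c a.
- by subst a; exists x.
- have [Z1 [_ E1]] := GLadj E EU; have [Z2 [_ E2]] := GLadj E EV.
  have [W EW] : ldiv1 c x.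
    by apply: (IH _ sx' x erefl A B c D); [exists (a :: Z1) | exists (a :: Z2)]; apply: beS.
  rewrite -EW /= in E1 E2.
  have sW : size W < k by have := be_size EW; rewrite /=; lia.
  have [W' EW'] : ldiv1 a W.
    apply: (IH _ sW W erefl A B a D); [exists Z1 | exists Z2]; apply: beS.
    exact: cancel1 E1. exact: cancel1 E2.
  by exists [:: a, c & W']; rewrite -EW -EW' (brr _ (adjS E)).
- have [Z1 [_ E1]] := GLfar E EU; have [Z2 [_ E2]] := GLfar E EV.
  have [W EW] : ldiv1 c x.
    by apply: (IH _ sx' x erefl A B c D); [exists Z1 | exists Z2]; apply: beS.
  by exists (a :: W); rewrite -EW (swr _ E).
Qed.

Lemma Glem z : forall x A B,
  (forall j, ldiv1 j A -> ldiv1 j B -> False) ->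
  (exists U, z ++ U ≡ x ++ A) -> (exists V, z ++ V ≡ x ++ B) -> exists W, z ++ W ≡ x.
Proof.
elim: z => [|c z IH] x A B D [U EU] [V EV]; first by exists x.
have [x1 E1] : ldiv1 c x by apply: (Gbase erefl D); [exists (z ++ U) | exists (z ++ V)].
rewrite -E1 /= in EU EV.
have [W EW] := IH x1 A B D (ex_intro _ U (cancel1 EU)) (ex_intro _ V (cancel1 EV)).
by exists W; rewrite -E1 /= EW.
Qed.

#[local] Hint Resolve beR : core.

Lemma valid_cons n j u : valid n (j :: u) = (0 < j < n) && valid n u.
Proof. by []. Qed.

Lemma ldiv_valid n j y : valid n y -> (left_div n [:: j] y <-> ldiv1 j y).
Proof.
move=> Vy; split; first by case=> u [_ E]; exists u.
case=> u E; exists u; split=> //.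
by have := be_valid (beS E) Vy; rewrite valid_cons => /andP [].
Qed.

Lemma rdiv_valid n j y : valid n y -> (right_div n [:: j] y <-> rdiv1 j y).
Proof.
move=> Vy; split; first by case=> u [_ E]; exists u.
case=> u E; exists u; split=> //.
by have := be_valid (beS E) Vy; rewrite valid_cat => /andP [].
Qed.

Lemma ldiv1_letter n j y : valid n y -> ldiv1 j y -> 0 < j < n.
Proof. by move=> Vy [u E]; have := be_valid (beS E) Vy; rewrite valid_cons => /andP []. Qed.

Lemma valid_flatten n xs : (forall x, x \in xs -> valid n x) -> valid n (flatten xs).
Proof.
elim: xs => [|x xs IH] //= H; rewrite valid_cat H ?inE ?eqxx //=.
by apply: IH => y Hy; apply: H; rewrite inE Hy orbT.
Qed.

Definition Lrel n x y := forall j, 0 < j < n -> left_div n [:: j] y -> right_div n [:: j] x.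

Lemma flatten_drop (xs : seq (seq nat)) k : k < size xs ->
  flatten (drop k xs) = nth [::] xs k ++ flatten (drop k.+1 xs).
Proof. by move=> H; rewrite (drop_nth [::] H). Qed.

Lemma step_P n x x' B z : valid n x -> x ++ x' ≡ delta n ->
  (forall j, ldiv1 j x' -> ldiv1 j B -> False) -> left_div n z (delta n) ->
  (exists V, z ++ V ≡ x ++ B) -> left_div n z x.
Proof.
move=> Vx Ex D [U [VU EU]] HV.
have [W EW] : exists W, z ++ W ≡ x.
  by apply: (Glem D) => //; exists U; rewrite EU -Ex.
exists W; split=> //; have := be_valid (beS EW) Vx; rewrite valid_cat => /andP [].
by [].
Qed.

Theorem KEY n xs : (forall x, x \in xs -> simple n x) ->
  (normal n xs <-> forall k, k.+1 < size xs -> Lrel n (nth [::] xs k) (nth [::] xs k.+1)).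
Proof.
move=> Hs.
have Hsk : forall k, k < size xs -> simple n (nth [::] xs k) by move=> k Hk; apply: Hs; exact: mem_nth.
have Vk : forall k, k < size xs -> valid n (nth [::] xs k) by move=> k Hk; case: (Hsk k Hk).
have Vf : forall k, valid n (flatten (drop k xs)).
  move=> k; apply: valid_flatten => x Hx; apply: (proj1 (Hs x _)).
  exact: mem_drop Hx.
split.
- case=> _ Hn k Hk j Hj Hl.
  have Hk' : k < size xs by lia.
  have [x' [Vx' Ex']] := proj2 (Hsk k Hk').
  case: (pselect (right_div n [:: j] (nth [::] xs k))) => // NR.
  have [R|[u Eu]] := Qlem erefl Ex' Hj.
    by case: NR; apply/(rdiv_valid _ (Vk k Hk')).
  have [w Ew] := proj1 (ldiv_valid _ (Vk _ Hk)) Hl.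
  have Vu : valid n u by have := be_valid (beS Eu) Vx'; rewrite valid_cons => /andP [].
  have Vw : valid n w by have := be_valid (beS Ew) (Vk _ Hk); rewrite valid_cons => /andP [].
  have [_ [_ Hg]] := Hn k Hk'.
  have : left_div n (nth [::] xs k ++ [:: j]) (nth [::] xs k).
    apply: Hg.
    + by rewrite valid_cat Vk //= andbT.
    + by exists u; split=> //; rewrite -Ex' -Eu -catA.
    + exists (w ++ flatten (drop k.+2 xs)); split.
        by rewrite valid_cat Vw; apply: Vf.
      by rewrite (flatten_drop Hk') (flatten_drop Hk) -Ew -!catA.
  by case=> z [_ /be_size]; rewrite !size_cat /=; lia.
- move=> Hl; split=> // k Hk.
  have P : forall m k, k + m.+1 = size xs -> forall z, valid n z -> left_div n z (delta n) ->
      left_div n z (flatten (drop k xs)) -> left_div n z (nth [::] xs k).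
  { elim=> [|m IH] k' Ek z Vz HU [V [VV EV]].
    all: have Hk' : k' < size xs by lia.
    all: have [x' [Vx' Ex']] := proj2 (Hsk k' Hk').
    all: rewrite (flatten_drop Hk') in EV.
    all: apply: (step_P (B := flatten (drop k'.+1 xs)) (Vk _ Hk') Ex' _ HU (ex_intro _ V EV)).
    + move=> j _ [u Eu].
      rewrite drop_oversize in Eu; last lia.
      by have := be_size Eu.
    + move=> j Hj [u Eu].
      have Vf1 := Vf k'.+1.
      have Hj' : 0 < j < n by apply: (ldiv1_letter Vf1); exists u.
      have Hk1 : k'.+1 < size xs by lia.
      have L : left_div n [:: j] (nth [::] xs k'.+1).
        apply: (IH k'.+1 _ [:: j]) => //.
        * by lia.
        * by rewrite /valid /= Hj'.
        * by have [z' [Vz' Ez']] := delta_div Hj'; exists z'.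
        * by apply/(ldiv_valid _ Vf1); exists u.
      have [v Ev] := proj1 (rdiv_valid _ (Vk _ Hk')) (Hl k' Hk1 j Hj' L).
      case: Hj => u' Eu'.
      apply: (@delta_sqfree n v j u'); rewrite -Ex' -Ev -Eu' -catA //. }
  have [x' [Vx' Ex']] := proj2 (Hsk k Hk).
  split; first by exists x'.
  split; first by exists (flatten (drop k.+1 xs)); split; [apply: Vf | rewrite (flatten_drop Hk)].
  move=> z Vz H1 H2; apply: (P (size xs - k.+1) k _ z) => //.
  move: Hk; set N := size xs; lia.
Qed.


Definition DLs n (y : seq nat) : {set 'I_n.-1} := [set k : 'I_n.-1 | `[< left_div n [:: k.+1] y >]].
Definition DRs n (x : seq nat) : {set 'I_n.-1} := [set k : 'I_n.-1 | `[< right_div n [:: k.+1] x >]].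
Definition Rb n (x y : seq nat) : bool := DLs n y \subset DRs n x.

Lemma DL_isE n y J : DL_is n y J <-> J = DLs n y.
Proof.
split.
- by move=> H; apply/setP => k; rewrite inE; apply/idP/asboolP => /H.
- by move=> -> k; rewrite inE; split => /asboolP.
Qed.

Lemma DR_supsetE n x J : DR_supset n x J <-> J \subset DRs n x.
Proof.
split.
- by move=> H; apply/subsetP => k /H Hk; rewrite inE; apply/asboolP.
- by move=> /subsetP H k /H; rewrite inE => /asboolP.
Qed.

Lemma LrelE n x y : 0 < n -> (Lrel n x y <-> Rb n x y).
Proof.
move=> Hn; split.
- move=> H; apply/subsetP => k; rewrite !inE => /asboolP Hk; apply/asboolP.
  by apply: H => //; have := ltn_ord k; lia.
- move=> /subsetP H j Hj Hl.
  have Hk : j.-1 < n.-1 by lia.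
  have := H (Ordinal Hk); rewrite !inE /= prednK; last by lia.
  by move=> K; apply/asboolP; apply: K; apply/asboolP.
Qed.

Lemma normal_sorted n xs : 0 < n -> (forall x, x \in xs -> simple n x) ->
  (normal n xs <-> sorted (Rb n) xs).
Proof.
move=> Hn Hs; rewrite (KEY Hs); split.
- by move=> H; apply/(sortedP [::]) => k Hk; apply/LrelE => //; apply: H.
- by move/(sortedP [::]) => H k Hk; apply/LrelE => //; apply: H.
Qed.

Definition okl n (s : seq (seq nat)) (J : {set 'I_n.-1}) (l : seq 'I_(size s)) : bool :=
  if l is x :: l' then sorted (relpre (fun i : 'I_(size s) => nth [::] s i) (Rb n)) l &&
    (J \subset DRs n (nth [::] s (last x l'))) else true.

Lemma okl_rcons n (s : seq (seq nat)) (J : {set 'I_n.-1}) l (i : 'I_(size s)) :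
  okl J (rcons l i) = okl (DLs n (nth [::] s i)) l && (J \subset DRs n (nth [::] s i)).
Proof.
case: l => [|x l] //=.
by rewrite rcons_path last_rcons.
Qed.

Lemma sorted_okl n (s : seq (seq nat)) y (l : seq 'I_(size s)) :
  sorted (Rb n) (rcons (map (fun i : 'I_(size s) => nth [::] s i) l) y) = okl (DLs n y) l.
Proof.
case: l => [|x l] //=.
by rewrite rcons_path (path_map (f := fun i : 'I_(size s) => nth [::] s i)) (last_map (fun i : 'I_(size s) => nth [::] s i)).
Qed.

Definition V n (s : seq (seq nat)) m (J : {set 'I_n.-1}) :=
  #|[set f : {ffun 'I_m -> 'I_(size s)} | okl J (map f (enum 'I_m))]|.

Lemma card_sum (I : finType) (P : pred I) : #|[set x | P x]| = \sum_(x : I) (P x : nat).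
Proof. by rewrite cardsE -sum1_card big_mkcond /=; apply: eq_bigr => i _; rewrite unfold_in; case: (P i). Qed.

Lemma V0 n (s : seq (seq nat)) (J : {set 'I_n.-1}) : V s 0 J = 1.
Proof.
rewrite /V card_sum.
rewrite (eq_bigr (fun _ => 1)); last by move=> f _; rewrite enum_ord0.
by rewrite sum1_card card_ffun card_ord card_ord.
Qed.

Definition ext (s : seq (seq nat)) m (p : 'I_(size s) * {ffun 'I_m -> 'I_(size s)}) : {ffun 'I_m.+1 -> 'I_(size s)} :=
  [ffun k => if unlift ord_max k is Some k' then p.2 k' else p.1].
Definition unext (s : seq (seq nat)) m (f : {ffun 'I_m.+1 -> 'I_(size s)}) : 'I_(size s) * {ffun 'I_m -> 'I_(size s)} :=
  (f ord_max, [ffun k => f (lift ord_max k)]).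

Lemma ext_map (s : seq (seq nat)) m (p : 'I_(size s) * {ffun 'I_m -> 'I_(size s)}) :
  map (ext p) (enum 'I_m.+1) = rcons (map p.2 (enum 'I_m)) p.1.
Proof.
rewrite enum_ordSr map_rcons -map_comp /ext ffunE unlift_none; congr rcons.
apply: eq_map => k /=; rewrite ffunE.
have -> : widen_ord (leqnSn m) k = lift ord_max k by apply: val_inj; rewrite /= /bump leqNgt ltn_ord.
by rewrite liftK.
Qed.

Lemma VS n (s : seq (seq nat)) m (J : {set 'I_n.-1}) : V s m.+1 J =
  \sum_(i : 'I_(size s)) (J \subset DRs n (nth [::] s i)) * V s m (DLs n (nth [::] s i)).
Proof.
rewrite /V card_sum.
rewrite (reindex (@ext s m)); last first.
  exists (@unext s m) => [[i g] _|f _] /=.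
  - rewrite /unext /ext ffunE unlift_none; congr pair; apply/ffunP => k.
    by rewrite !ffunE liftK.
  - apply/ffunP => k; rewrite /ext /unext ffunE.
    by case: unliftP => [j ->|->] //; rewrite ffunE.
rewrite -(pair_big predT predT (fun i g => (okl J (map (ext (i, g)) (enum 'I_m.+1)) : nat))) /=.
apply: eq_bigr => i _; rewrite card_sum big_distrr /=.
apply: eq_bigr => g _; rewrite ext_map /= okl_rcons.
by case: (okl _ _); case: (J \subset _).
Qed.

Lemma a_countE n s I J : a_count n s I J =
  \sum_(i : 'I_(size s)) ((I == DLs n (nth [::] s i)) && (J \subset DRs n (nth [::] s i))).
Proof.
rewrite /a_count card_sum; apply: eq_bigr => i _.
case: asboolP => [[/DL_isE -> /DR_supsetE ->]|H]; first by rewrite eqxx.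
case: eqP => [E|] //; case: (boolP (J \subset _)) => // HJ.
by case: H; split; [apply/DL_isE | apply/DR_supsetE].
Qed.

Lemma V_rec n s m J : @V n s m.+1 J =
  \sum_(K < #|{set 'I_n.-1}|) @V n s m (enum_val K) * a_count n s (enum_val K) J.
Proof.
rewrite VS.
transitivity (\sum_(K < #|{set 'I_n.-1}|) \sum_(i : 'I_(size s)) @V n s m (enum_val K) *
  ((enum_val K == DLs n (nth [::] s i)) && (J \subset DRs n (nth [::] s i)))); last first.
  by apply: eq_bigr => K _; rewrite a_countE big_distrr.
rewrite exchange_big /=; apply: eq_bigr => i _.
rewrite (bigD1 (enum_rank (DLs n (nth [::] s i)))) //= enum_rankK eqxx /=.
rewrite big1 ?addn0; first by rewrite mulnC.
move=> K HK; case: eqP => [E|]; last by rewrite muln0.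
by case/eqP: HK; rewrite -E enum_valK.
Qed.

Local Open Scope ring_scope.

Lemma sylvester (R : idomainType) p q (P : 'M[R]_(p, q)) (Q : 'M[R]_(q, p)) :
  'X^q * char_poly (P *m Q) = 'X^p * char_poly (Q *m P).
Proof.
set A := map_mx polyC P; set B := map_mx polyC Q.
set X : {poly R} := 'X.
have E1 : char_poly (P *m Q) = \det (X%:M - A *m B) by rewrite /char_poly /char_poly_mx map_mxM.
have E2 : char_poly (Q *m P) = \det (X%:M - B *m A) by rewrite /char_poly /char_poly_mx map_mxM.
set N := block_mx (X%:M : 'M_p) A B (1%:M : 'M_q).
have D1 : \det (block_mx 1%:M (- A) 0 (X%:M : 'M_q) *m N) = \det (X%:M - A *m B) * X ^+ q.
  rewrite /N mulmx_block !mul1mx !mul0mx !mulmx1 !mulNmx addrN !add0r addrC.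
  by rewrite det_lblock det_scalar.
have D2 : \det (block_mx 1%:M 0 (- B) (X%:M : 'M_q) *m N) = X ^+ p * \det (X%:M - B *m A).
  rewrite /N mulmx_block !mul1mx !mul0mx !mulmx1 !mulNmx !addr0 -scalar_mxC addNr.
  by rewrite det_ublock det_scalar addrC.
rewrite det_mulmx det_ublock det1 mul1r det_scalar in D1.
rewrite det_mulmx det_lblock det1 mul1r det_scalar in D2.
rewrite E1 E2 -D2 mulrC -D1.
done.
Qed.


Lemma Vmat n s m J : (@V n s m J)%:Z =
  ((const_mx 1 : 'rV[int]_(#|{set 'I_n.-1}|)) *m (Mprime n s) ^+ m) 0 (enum_rank J).
Proof.
elim: m J => [|m IH] J.
  by rewrite V0 expr0 mulmx1 mxE.
rewrite exprSr mulmxA mxE V_rec.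
rewrite (big_morph Posz PoszD (erefl (Posz 0))).
apply: eq_bigr => K _; rewrite PoszM IH enum_valK mxE; congr (_ * _).
by rewrite /Mprime mxE enum_rankK.
Qed.

Local Close Scope ring_scope.

Lemma bcountV n s y J d : 0 < n -> simple_reps n s -> simple n y -> DL_is n y J ->
  b_count n d s y = @V n s d.-1 J.
Proof.
move=> Hn [Hs _] Hy /DL_isE ->.
rewrite /b_count /V; apply: eq_card => f; rewrite !inE.
have Hall : forall x, x \in [seq nth [::] s (f k) | k <- enum 'I_d.-1] ++ [:: y] -> simple n x.
  move=> x; rewrite mem_cat inE => /orP [/mapP [k _ ->]|/eqP ->] //.
  by apply: Hs; apply: mem_nth.
have E : sorted (Rb n) ([seq nth [::] s (f k) | k <- enum 'I_d.-1] ++ [:: y]) =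
    okl (DLs n y) [seq f k | k <- enum 'I_d.-1].
  rewrite cats1 (map_comp (fun i : 'I_(size s) => nth [::] s i) f).
  exact: sorted_okl.
apply/asboolP/idP => [/(normal_sorted Hn Hall)|H]; first by rewrite E.
by apply/(normal_sorted Hn Hall); rewrite E.
Qed.

Local Open Scope ring_scope.

Definition Pm n s : 'M[int]_(size s, #|{set 'I_n.-1}|) :=
  \matrix_(i < size s, K < #|{set 'I_n.-1}|) (((enum_val K : {set 'I_n.-1}) \subset DRs n (nth [::] s i)) : nat)%:Z.
Definition Qm n s : 'M[int]_(#|{set 'I_n.-1}|, size s) :=
  \matrix_(K < #|{set 'I_n.-1}|, j < size s) (((enum_val K : {set 'I_n.-1}) == DLs n (nth [::] s j)) : nat)%:Z.

Lemma Mn_PQ n s : (0 < n)%N -> simple_reps n s -> Mn n s = Pm n s *m Qm n s.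
Proof.
move=> Hn [Hs _]; apply/matrixP => i j; rewrite !mxE.
rewrite (bigD1 (enum_rank (DLs n (nth [::] s j)))) //= !mxE enum_rankK eqxx mulr1.
rewrite big1 ?addr0; last first.
  move=> K HK; rewrite !mxE; case: eqP => [E|]; last by rewrite mulr0.
  by case/eqP: HK; rewrite -E enum_valK.
have Hall : forall x, x \in [:: nth [::] s i; nth [::] s j] -> simple n x.
  by move=> x; rewrite !inE => /orP [] /eqP ->; apply: Hs; apply: mem_nth.
case: asboolP => [/(normal_sorted Hn Hall)|H] /=.
  by rewrite andbT /Rb => ->.
case: (boolP (DLs _ _ \subset _)) => // E.
by case: H; apply/(normal_sorted Hn Hall); rewrite /= andbT.
Qed.

Lemma Mprime_QP n s : Mprime n s = Qm n s *m Pm n s.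
Proof.
apply/matrixP => I J; rewrite !mxE a_countE.
rewrite (big_morph Posz PoszD (erefl (Posz 0))).
apply: eq_bigr => i _; rewrite !mxE -PoszM.
by case: (_ == _); case: (_ \subset _).
Qed.

Unset Implicit Arguments.
Theorem lemma2p12 (n : nat) (s : seq (seq nat)) :
  (1 <= n)%N -> simple_reps n s ->
  (exists k : nat,
      char_poly (Mn n s) = 'X^k * char_poly (Mprime n s) \/
      char_poly (Mprime n s) = 'X^k * char_poly (Mn n s)) /\
  (forall (y : seq nat) (J : {set 'I_n.-1}) (d : nat),
      simple n y -> DL_is n y J -> (1 <= d)%N ->
      (b_count n d s y)%:Z =
        ((const_mx 1 : 'rV[int]_(#|{set 'I_n.-1}|)) *m (Mprime n s) ^+ d.-1) 0 (enum_rank J)).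
Proof.
move=> Hn Hs; split.
- rewrite (Mn_PQ Hn Hs) Mprime_QP.
  have S := sylvester (Pm n s) (Qm n s).
  have nz : forall k, ('X^k : {poly int}) != 0 by move=> k; rewrite expf_neq0 // polyX_eq0.
  case: (leqP #|{set 'I_n.-1}| (size s)) => H.
  + exists (size s - #|{set 'I_n.-1}|)%N; left.
    apply: (mulfI (nz #|{set 'I_n.-1}|)); rewrite S mulrA -exprD subnKC //.
  + exists (#|{set 'I_n.-1}| - size s)%N; right.
    apply: (mulfI (nz (size s))); rewrite -S mulrA -exprD subnKC //.
    exact: ltnW.
- move=> y J d Hy HJ Hd.
  by rewrite (@bcountV n s y J d Hn Hs Hy HJ) Vmat.
Qed.
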